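(* If $v$ is a leaf of a tree $T$ with at least four vertices, then fewer than half of the subtrees of $T$ contain $v$.
   Context: A leaf is a vertex of degree at most 1. A subtree of $T$ is a nonempty set of vertices of $T$ inducing a connected subgraph. *)

(* Defs.v *)
From mathcomp Require Import all_boot.
Set Implicit Arguments. Unset Strict Implicit. Unset Printing Implicit Defensive.

Definition simple_graph (T : finType) (e : rel T) : Prop :=
  symmetric e /\ irreflexive e.

Definition deg (T : finType) (e : rel T) (v : T) : nat := #|[set w | e v w]|.

Definition leaf (T : finType) (e : rel T) (v : T) : bool := deg e v <= 1.

Definition induced (T : finType) (e : rel T) (S : {set T}) : rel T :=
  fun x y => [&& x \in S, y \in S & e x y].

Definition induces_connected (T : finType) (e : rel T) (S : {set T}) : bool :=
  [forall x in S, forall y in S, connect (induced e S) x y].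

Definition connected_graph (T : finType) (e : rel T) : bool :=
  [forall x, forall y, connect e x y].

Definition has_cycle (T : finType) (e : rel T) : Prop :=
  exists c : seq T, [/\ 3 <= size c, uniq c & cycle e c].

Definition is_tree (T : finType) (e : rel T) : Prop :=
  [/\ simple_graph e, 0 < #|T|, connected_graph e & ~ has_cycle e].

Definition subtree (T : finType) (e : rel T) (S : {set T}) : bool :=
  (S != set0) && induces_connected e S.

Definition subtrees (T : finType) (e : rel T) : {set {set T}} :=
  [set S | subtree e S].

(* Main.v *)
Require Import Defs.
From mathcomp Require Import all_boot.
From mathcomp Require Import zify.

Section Aux.
Variables (T : finType) (e : rel T) (v : T).
Hypothesis esym : symmetric e.
Hypothesis hleaf : leaf e v.

Lemma leaf_uniq a b : e v a -> e v b -> a = b.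
Proof.
move=> ha hb; apply/eqP; apply: contraT => hab.
have : #|[set a; b]| <= deg e v.
  apply: subset_leq_card; apply/subsetP => z; rewrite !inE.
  by case/orP=> /eqP ->; rewrite ?ha ?hb.
rewrite cards2 hab; move: hleaf; rewrite /leaf; lia.
Qed.

Lemma path_in (S : {set T}) x p : path (induced e S) x p -> all (mem S) p.
Proof.
elim: p x => [|a p IH] x //= /andP [/and3P [_ ha _] hp].
by rewrite ha (IH a).
Qed.

Lemma remove_leaf (S : {set T}) x y :
  x \in S :\ v -> y \in S :\ v -> connect (induced e S) x y ->
  connect (induced e (S :\ v)) x y.
Proof.
move=> hx hy /connectP [p hp ey]; subst y.
case: (shortenP hp) hy => p' hu hp' _ hy.
have hv : v \notin x :: p'.
  apply/negP => hin.
  rewrite inE in hin; case/orP: hin => [/eqP xv|hin].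
    by move: hx; rewrite !inE -xv eqxx.
  case: (splitPr hin) hu hp' hy => p1 p2.
  rewrite last_cat /=.
  case: p2 => [|b p3].
    by move=> _ _; rewrite /= !inE eqxx.
  rewrite cat_path => /andP [_] /= /and3P [h1 h2 _] hu _.
  move: h1 h2; rewrite /induced => /and3P [_ _ h1] /and3P [_ _ h2].
  have eab : last x p1 = b by apply: leaf_uniq; rewrite // esym.
  case/andP: hu => hx' hu.
  have : last x p1 \in x :: p1 by apply: mem_last.
  rewrite eab inE => /orP [/eqP bx|bp1].
    by move: hx'; rewrite bx mem_cat !inE eqxx !orbT.
  move: hu; rewrite cat_uniq => /and3P [_ /hasPn H _].
  by move: (H b); rewrite !inE eqxx orbT bp1 => /(_ isT).
apply/connectP; exists p' => //.
refine (sub_in_path (P := mem (S :\ v)) _ _ hu).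
  move=> a b ha hb; rewrite /induced => /and3P [_ _ hab].
  by rewrite ha hb hab.
apply/allP => z hz.
have hzv : z != v by apply: contraNneq hv => <-.
change (z \in S :\ v); rewrite !inE hzv /=.
move: hz; rewrite inE => /orP [/eqP -> | hz]; first by move: hx; rewrite inE => /andP [].
by move/allP: (@path_in S x p' hu) => /(_ z hz).
Qed.

Hypothesis eirr : irreflexive e.

Lemma sub_neighbor (S : {set T}) : subtree e S -> v \in S -> S != [set v] ->
  exists2 w, w \in S :\ v & e v w.
Proof.
case/andP=> _ /forall_inP hc hvS hS.
have [x hxS hxv] : exists2 x, x \in S & x != v.
  apply/exists_inP; apply: contraNT hS => /exists_inPn H.
  apply/eqP/setP => z; rewrite inE; apply/idP/idP.
    by move=> hz; move: (H z hz); rewrite negbK.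
  by move/eqP ->.
move: (hc v hvS) => /forall_inP /(_ x hxS) /connectP [p hp ex].
case: p hp ex => [|b p] /=; first by move=> _ ex; rewrite ex eqxx in hxv.
case/andP=> /and3P [_ hb evb] _ _; exists b => //.
rewrite !inE hb andbT; apply: contraTneq evb => ->; by rewrite eirr.
Qed.

Lemma subtree_remove (S : {set T}) : subtree e S -> v \in S -> S != [set v] ->
  subtree e (S :\ v).
Proof.
move=> hS hvS hne; have [w hw _] := @sub_neighbor S hS hvS hne.
apply/andP; split; first by apply/set0Pn; exists w.
apply/forall_inP => x hx; apply/forall_inP => y hy.
apply: remove_leaf => //.
case/andP: hS => _ /forall_inP hc.
move: hx hy; rewrite !inE => /andP [_ hx] /andP [_ hy].
by move: (hc x hx) => /forall_inP /(_ y hy).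
Qed.
End Aux.

Lemma single_subtree (T : finType) (e : rel T) (w : T) : subtree e [set w].
Proof.
apply/andP; split; first by apply/set0Pn; exists w; rewrite inE.
apply/forall_inP => x; rewrite inE => /eqP ->.
apply/forall_inP => y; rewrite inE => /eqP ->; exact: connect0.
Qed.

Theorem mainTheorem5 (T : finType) (e : rel T) (v : T) :
  is_tree e -> 4 <= #|T| -> leaf e v ->
  2 * #|[set S in subtrees e | v \in S]| < #|subtrees e|.
Proof.
case=> [[esym eirr] _ _ _] hT hleaf.
set C := [set S in subtrees e | v \in S].
set N := [set S in subtrees e | v \notin S].
have hsum : #|C| + #|N| = #|subtrees e|.
  rewrite -(cardsID [set S : {set T} | v \in S] (subtrees e)); congr (_ + _).
    by apply: eq_card => S; rewrite !inE.
  by apply: eq_card => S; rewrite !inE andbC.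
set X := ~: (v |: [set w | e v w]).
have hX : 2 <= #|X|.
  have := cardsC (v |: [set w | e v w]); rewrite cardsU1 -cardsT.
  move: hT; rewrite -cardsT.
  move: hleaf; rewrite /leaf /deg /X; case: (v \notin _) => /=; lia.
have [w1 hw1] : exists w1, w1 \in X.
  by apply/set0Pn; rewrite -card_gt0; lia.
have [w2 hw2] : exists w2, w2 \in X :\ w1.
  apply/set0Pn; rewrite -card_gt0.
  by move: hX; rewrite (cardsD1 w1 X) hw1; lia.
move: hw2; rewrite inE => /andP [w21 hw2].
set P := [set [set w1]; [set w2]].
have hP : #|P| = 2.
  have hne : [set w1] != [set w2].
    apply/negP => /eqP /set1_inj h.
    by move: w21; rewrite h set11.
  by rewrite cards2 hne.
set f := fun S : {set T} => S :\ v.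
have hinj : {in C :\ [set v] &, injective f}.
  move=> S1 S2; rewrite !inE => /andP [_ /andP [_ h1]] /andP [_ /andP [_ h2]] heq.
  by rewrite -(setD1K h1) -(setD1K h2); congr (_ |: _).
have hsub : f @: (C :\ [set v]) \subset N :\: P.
  apply/subsetP => _ /imsetP [S hS ->].
  move: hS; rewrite !inE => /andP [hne /andP [hst hvS]].
  have [w hw evw] := @sub_neighbor _ e v eirr S hst hvS hne.
  rewrite (@subtree_remove _ e v esym hleaf eirr S hst hvS hne).
  rewrite eqxx /= andbT.
  apply/negP => /orP [] /eqP hS.
    move: hw; rewrite -/(f S) hS inE => /eqP wE.
    by move: hw1; rewrite -wE !inE evw orbT.
  move: hw; rewrite -/(f S) hS inE => /eqP wE.
  by move: hw2; rewrite -wE !inE evw orbT.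
have := subset_leq_card hsub; rewrite card_in_imset //.
have hPN : P \subset N.
  apply/subsetP => S; rewrite !inE => /orP [] /eqP ->; rewrite single_subtree /= inE.
    by apply: contraTneq hw1 => <-; rewrite !inE eqxx.
  by apply: contraTneq hw2 => <-; rewrite !inE eqxx.
rewrite [#|N :\: P|]cardsD (setIidPr hPN) hP.
have := subset_leq_card hPN; rewrite hP.
have := cardsD1 [set v] C.
rewrite -hsum; case: ([set v] \in C) => /=.
  by apply: (_ : forall a c b : nat, a = 1 + c -> 1 < b -> c <= b - 2 -> 2*a < a + b); lia.
by apply: (_ : forall a c b : nat, a = 0 + c -> 1 < b -> c <= b - 2 -> 2*a < a + b); lia.
Qed.
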